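(* For $0<x<\frac12$, $$\prod_{k=0}^{\infty}\left(1+x^{2^k}+(2x)^{2^k}\right)=\sum_{n=0}^{\infty}c(n)x^n .$$
   Context: For $n\ge 0$, $c(n)=\sum_{i=0}^{n}\left(\binom{n}{i}\bmod 2\right)2^{i}$, the integer whose binary digits form the $n$-th row of Pascal's triangle modulo $2$ (so $c(0),c(1),\dots=1,3,5,15,17,51,\dots$). *)

(* Defs.v *)
From Stdlib Require Import Reals Arith List.
Import ListNotations.
From Coquelicot Require Import Coquelicot.
Open Scope R_scope.

Fixpoint binom (n k : nat) : nat :=
  match n, k with
  | _, O => 1%nat
  | O, S _ => 0%nat
  | S n', S k' => (binom n' k' + binom n' k)%nat
  end.

Fixpoint csum (n m : nat) : nat :=
  match m with
  | O => 0%nat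
  | S m' => (csum n m' + (binom n m' mod 2) * 2 ^ m')%nat
  end.

Definition c (n : nat) : nat := csum n (S n).

Fixpoint partial_prod (x : R) (N : nat) : R :=
  match N with
  | O => 1
  | S N' => partial_prod x N' * (1 + x ^ (2 ^ N') + (2 * x) ^ (2 ^ N'))
  end.

Example c_values : List.map c [0;1;2;3;4;5]%nat = [1;3;5;15;17;51]%nat.
Proof. reflexivity. Qed.

(* Main.v *)
Require Import Defs.
From Stdlib Require Import Reals Lia Lra.
From Coquelicot Require Import Coquelicot.
Open Scope R_scope.

Lemma binom_big n k : (n < k)%nat -> binom n k = 0%nat.
Proof.
  revert k; induction n as [|n IH]; intros [|k] H; simpl; try lia.
  rewrite !IH; lia.
Qed.

Lemma binom_n0 n : binom n 0 = 1%nat.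
Proof. destruct n; reflexivity. Qed.

Lemma binom_par m : forall i,
  (binom (2*m) (2*i) mod 2 = binom m i mod 2 /\ binom (2*m) (2*i+1) mod 2 = 0)%nat.
Proof.
  induction m as [|m IH]; intros i.
  - destruct i as [|i]; simpl.
    + auto.
    + replace (i + S (i+0))%nat with (S (i+i))%nat by lia. simpl. auto.
  - replace (2 * S m)%nat with (S (S (2*m))) by lia.
    destruct i as [|i].
    + change (2*0+1)%nat with 1%nat. change (2*0)%nat with 0%nat.
      destruct (IH 0%nat) as [_ H1].
      change (2*0+1)%nat with 1%nat in H1.
      set (n := (2*m)%nat) in *. cbn [binom].
      split; [reflexivity|].
      rewrite binom_n0.
      replace (1 + (1 + binom n 1))%nat with (binom n 1 + 1 * 2)%nat by lia.
      rewrite Nat.Div0.mod_add. exact H1.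
    + replace (2 * S i)%nat with (S (S (2*i))) by lia.
      replace (S (S (2 * i)) + 1)%nat with (S (S (2*i+1))) by lia.
      cbn [binom].
      destruct (IH i) as [A B]. destruct (IH (S i)) as [C D].
      replace (2 * S i)%nat with (S (2*i+1)) in C, D by lia.
      replace (S (2*i+1) + 1)%nat with (S (S (2*i+1))) in D by lia.
      replace (S (2*i)) with (2*i+1)%nat by lia.
      cbn [binom].
      split.
      *
        rewrite Nat.Div0.add_mod, (Nat.Div0.add_mod (binom m i)).
        rewrite <- A, <- C.
        rewrite <- (Nat.Div0.add_mod _ (binom (2*m) (S (2*i+1)))).
        rewrite <- Nat.Div0.add_mod.
        rewrite <- (Nat.Div0.mod_mod (binom (2*m) (2*i+1))) in B.
        remember (binom (2*m) (2*i)) as a0.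
        remember (binom (2*m) (2*i+1)) as a1.
        remember (binom (2*m) (S (2*i+1))) as a2.
        replace (a0 + a1 + (a1 + a2))%nat with (a0 + a2 + a1 * 2)%nat by lia.
        rewrite Nat.Div0.mod_add. reflexivity.
      * remember (binom (2*m) (2*i+1)) as a1.
        remember (binom (2*m) (S (2*i+1))) as a2.
        remember (binom (2*m) (S (S (2*i+1)))) as a3.
        replace (a1 + a2 + (a2 + a3))%nat with (a1 + a3 + a2 * 2)%nat by lia.
        rewrite Nat.Div0.mod_add, Nat.Div0.add_mod, B, D. reflexivity.
Qed.

Definition bR n i := INR (binom n i mod 2).
Fixpoint csq (q : R) n m := match m with O => 0 | S m' => csq q n m' + bR n m' * q^m' end.
Definition cq q n := csq q n (S n).

Lemma csq_S q n m : csq q n (S m) = csq q n m + bR n m * q^m.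
Proof. reflexivity. Qed.

Lemma csq_stab q n m : (n < m)%nat -> csq q n m = cq q n.
Proof.
  intros H. induction H as [|m H IH].
  - reflexivity.
  - simpl. rewrite IH. unfold bR. rewrite binom_big by lia. simpl. ring.
Qed.

Lemma csq_even q n m : csq q (2*n) (2*m) = csq (q*q) n m.
Proof.
  induction m as [|m IH]; [reflexivity|].
  replace (2 * S m)%nat with (S (S (2*m))) by lia.
  rewrite !csq_S. rewrite <- IH. unfold bR.
  destruct (binom_par n m) as [A B]. rewrite A.
  replace (S (2*m)) with (2*m+1)%nat by lia. rewrite B.
  rewrite pow_add, Rpow_mult_distr.
  replace (2*m)%nat with (m+m)%nat by lia. rewrite pow_add. simpl. ring.
Qed.

Lemma cq_even q n : cq q (2*n) = cq (q*q) n.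
Proof.
  rewrite <- (csq_stab q (2*n) (2*(S n))) by lia.
  rewrite csq_even. reflexivity.
Qed.

Lemma bR_odd n i : bR (S (2*n)) (S i) = bR (2*n) (S i) + bR (2*n) i.
Proof.
  unfold bR. cbn [binom].
  destruct (Nat.Even_or_Odd i) as [[j Hj]|[j Hj]]; subst i.
  - destruct (binom_par n j) as [_ B].
    replace (S (2*j)) with (2*j+1)%nat by lia.
    rewrite Nat.Div0.add_mod, B, Nat.add_0_r, Nat.Div0.mod_mod.
    simpl. ring.
  - destruct (binom_par n j) as [_ B].
    rewrite Nat.Div0.add_mod, B, Nat.add_0_l, Nat.Div0.mod_mod.
    simpl. ring.
Qed.

Lemma csq_odd q n m : csq q (S (2*n)) (S m) = csq q (2*n) (S m) + q * csq q (2*n) m.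
Proof.
  induction m as [|m IH].
  - simpl. unfold bR. rewrite !binom_n0. simpl. ring.
  - change (csq q (S (2*n)) (S (S m))) with (csq q (S (2*n)) (S m) + bR (S (2*n)) (S m) * q^(S m)).
    rewrite IH, bR_odd. simpl. ring.
Qed.

Lemma cq_odd q n : cq q (S (2*n)) = (1+q) * cq q (2*n).
Proof.
  unfold cq at 1. rewrite csq_odd.
  rewrite (csq_stab q (2*n) (S (S (2*n)))) by lia.
  rewrite (csq_stab q (2*n) (S (2*n))) by lia. ring.
Qed.

Lemma csum_csq n m : INR (csum n m) = csq 2 n m.
Proof.
  induction m as [|m IH]; [reflexivity|].
  simpl csum. simpl csq. rewrite plus_INR, mult_INR, pow_INR, IH.
  unfold bR. replace (INR 2) with 2 by (simpl; ring). reflexivity.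
Qed.

Lemma c_cq n : INR (c n) = cq 2 n.
Proof. apply csum_csq. Qed.

Lemma csum_bound n m : (csum n m < 2 ^ m)%nat.
Proof.
  induction m as [|m IH]; [simpl; lia|].
  change (csum n (S m)) with (csum n m + binom n m mod 2 * 2 ^ m)%nat.
  rewrite Nat.pow_succ_r'.
  pose proof (Nat.mod_upper_bound (binom n m) 2 ltac:(lia)).
  assert (binom n m mod 2 <= 1)%nat as H1 by lia.
  assert (binom n m mod 2 * 2^m <= 2^m)%nat.
  { rewrite <- (Nat.mul_1_l (2^m)) at 2. apply Nat.mul_le_mono_r; exact H1. }
  lia.
Qed.

Fixpoint fsum (f : nat -> R) K := match K with O => 0 | S K' => fsum f K' + f K' end.

Lemma fsum_S f K : fsum f (S K) = fsum f K + f K.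
Proof. reflexivity. Qed.

Lemma fsum_split f K : fsum f (2*K) = fsum (fun n => f (2*n)%nat) K + fsum (fun n => f (S (2*n))) K.
Proof.
  induction K as [|K IH]; [simpl; ring|].
  replace (2 * S K)%nat with (S (S (2*K))) by lia.
  rewrite !fsum_S, IH. ring.
Qed.

Lemma fsum_scal k f K : fsum (fun n => k * f n) K = k * fsum f K.
Proof. induction K; simpl; [ring|rewrite IHK; ring]. Qed.

Lemma fsum_ext f g K : (forall n, f n = g n) -> fsum f K = fsum g K.
Proof. intros H; induction K; simpl; [reflexivity|rewrite IHK, H; reflexivity]. Qed.

Fixpoint pp (q x : R) N := match N with O => 1 | S N' => pp q x N' * (1 + x^(2^N') + (q*x)^(2^N')) end.

Lemma pp_first q x N : pp q x (S N) = (1 + x + q*x) * pp (q*q) (x*x) N.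
Proof.
  induction N as [|N IH].
  - simpl. ring.
  - change (pp q x (S (S N))) with (pp q x (S N) * (1 + x^(2^(S N)) + (q*x)^(2^(S N)))).
    rewrite IH. simpl pp.
    replace (q*q*(x*x)) with ((q*x)*(q*x)) by ring.
    rewrite !Rpow_mult_distr.
    replace (2^S N)%nat with (2^N + 2^N)%nat by (simpl; lia).
    rewrite !pow_add. ring.
Qed.

Lemma pp_sum N : forall q x, pp q x N = fsum (fun n => cq q n * x^n) (2^N).
Proof.
  induction N as [|N IH]; intros q x.
  - simpl; unfold cq; simpl; unfold bR; simpl; ring.
  - rewrite pp_first, IH.
    replace (2^S N)%nat with (2 * 2^N)%nat by (simpl; lia).
    rewrite fsum_split.
    rewrite (fsum_ext (fun n => cq q (S (2*n)) * x ^ (S (2*n))) (fun n => ((1+q)*x) * (cq (q*q) n * (x*x)^n)))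
      by (intros n; rewrite cq_odd, cq_even, Rpow_mult_distr;
          replace (S (2*n))%nat with (n+n+1)%nat by lia; rewrite !pow_add; simpl; ring).
    rewrite (fsum_ext (fun n => cq q (2*n) * x ^ (2*n)) (fun n => (cq (q*q) n * (x*x)^n)))
      by (intros n; rewrite cq_even, Rpow_mult_distr;
          replace (2*n)%nat with (n+n)%nat by lia; rewrite pow_add; reflexivity).
    rewrite fsum_scal. ring.
Qed.

Lemma pp_partial x N : partial_prod x N = pp 2 x N.
Proof. induction N; simpl; [reflexivity| rewrite IHN; reflexivity]. Qed.

Lemma sum_n_fsum (a : nat -> R) N : sum_n a N = fsum a (S N).
Proof.
  induction N as [|N IH].
  - rewrite sum_O. simpl. ring.
  - rewrite sum_Sn, IH. reflexivity.
Qed.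

Theorem corollary1 (x : R) (hx : 0 < x < 1/2) :
  exists L : R,
    is_lim_seq (fun N => partial_prod x N) L /\
    is_series (fun n => INR (c n) * x ^ n) L.
Proof.
  set (a := fun n => INR (c n) * x ^ n).
  assert (Hb : forall n, norm (a n) <= 2 * (2*x)^n).
  { intros n. unfold a. change norm with Rabs. simpl.
    pose proof (pow_lt x n (proj1 hx)) as Hx.
    pose proof (pos_INR (c n)).
    rewrite Rabs_pos_eq by (apply Rmult_le_pos; lra).
    assert (INR (c n) <= 2 * 2^n).
    { assert (Hc : (c n < 2 ^ S n)%nat) by apply csum_bound.
      apply lt_INR in Hc. rewrite pow_INR in Hc. replace (INR 2) with 2 in Hc by (simpl; ring). simpl in Hc. lra. }
    rewrite Rpow_mult_distr. nra. }
  assert (Hex : ex_series a).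
  { apply (ex_series_le a (fun n => 2 * (2*x)^n) Hb).
    apply (ex_series_scal_l 2 (fun n => (2*x)^n)).
    apply ex_series_geom. rewrite Rabs_pos_eq; lra. }
  exists (Series a). split; [|apply Series_correct; exact Hex].
  assert (Hs : is_lim_seq (sum_n a) (Series a)) by exact (Series_correct a Hex).
  assert (Heq : forall N, partial_prod x N = sum_n a (2^N - 1)).
  { intros N. rewrite sum_n_fsum, pp_partial, pp_sum.
    assert (0 < 2^N)%nat by (apply Nat.neq_0_lt_0, Nat.pow_nonzero; lia).
    replace (S (2^N - 1)) with (2^N)%nat by lia.
    apply fsum_ext. intros n. unfold a. rewrite c_cq. reflexivity. }
  apply (is_lim_seq_ext (fun N => sum_n a (2^N - 1))); [intros; symmetry; apply Heq|].
  apply (is_lim_seq_subseq (sum_n a) (Series a) (fun N => (2^N - 1)%nat)); [|exact Hs].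
  apply eventually_subseq. intros n.
  assert (0 < 2^n)%nat by (apply Nat.neq_0_lt_0, Nat.pow_nonzero; lia).
  rewrite Nat.pow_succ_r'. lia.
Qed.
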